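(* Let $(G,k)$ be a connected quadratic Lie group with Lie algebra $\mathcal G$, and let $\langle x,y\rangle=k(u(x),y)$ be a flat left invariant semi-Riemannian metric on $G$, where $u$ is a $k$-symmetric linear isomorphism of $\mathcal G$. Let $L_x:y\mapsto xy$ denote left multiplication for the Levi-Civita product. Then $L_e^2=0$ for every $e\in\mathcal Z(\mathcal G)$. If moreover $\langle\,,\,\rangle$ is Riemannian or Lorentzian, then $L_e=0$ for every $e\in\mathcal Z(\mathcal G)$, and $u(\mathcal Z(\mathcal G))\subset\mathcal Z(\mathcal G)$.
   Context: A quadratic Lie group is a Lie group $G$ with a bi-invariant semi-Riemannian metric $k$; equivalently $k$ is a nondegenerate symmetric bilinear form on $\mathcal G$ with each $\mathrm{ad}_x$ $k$-skew-symmetric. The Levi-Civita product of a left invariant metric is the bilinear product on $\mathcal G$ defined by $(xy)^+=\nabla_{x^+}y^+$, where $x^+$ is the left invariant vector field with value $x$ at the unit and $\nabla$ the Levi-Civita connection; it is determined by the Koszul formula $2\langle xy,z\rangle=\langle[x,y],z\rangle-\langle[y,z],x\rangle+\langle[z,x],y\rangle$. $\mathcal Z(\mathcal G)$ is the center of $\mathcal G$. *)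

(* Defs.v *)
(* The Lie algebra is modelled as R^n = 'rV[R]_n over a real
   closed field R (generalising the reals). *)
From HB Require Import structures.
From mathcomp Require Import all_boot all_order all_algebra.
Set Implicit Arguments. Unset Strict Implicit. Unset Printing Implicit Defensive.
Import Order.TTheory GRing.Theory Num.Theory.
Local Open Scope ring_scope.

Section Defs.
Variables (R : rcfType) (n : nat).
Notation V := 'rV[R]_n.

Definition bform (M : 'M[R]_n) (x y : V) : R := (x *m M *m y^T) 0 0.

Definition lie_bracket (br : V -> V -> V) : Prop :=
  (forall a x y z, br (a *: x + y) z = a *: br x z + br y z) /\
  (forall a x y z, br x (a *: y + z) = a *: br x y + br x z) /\
  (forall x, br x x = 0) /\
  (forall x y z, br x (br y z) + br y (br z x) + br z (br x y) = 0).

Definition quadratic (br : V -> V -> V) (K : 'M[R]_n) : Prop :=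
  lie_bracket br /\ K^T = K /\ K \in unitmx /\
  (forall x y z, bform K (br x y) z = - bform K y (br x z)).

Definition k_symmetric (K U : 'M[R]_n) : Prop :=
  forall x y, bform K (x *m U) y = bform K x (y *m U).

(* Levi-Civita product of the left invariant metric g, via the Koszul formula *)
Definition levi_civita (br : V -> V -> V) (g : V -> V -> R) (p : V -> V -> V) :=
  forall x y z, 2 * g (p x y) z = g (br x y) z - g (br y z) x + g (br z x) y.

Definition flat (br : V -> V -> V) (p : V -> V -> V) : Prop :=
  forall x y z, p x (p y z) - p y (p x z) - p (br x y) z = 0.

Definition central (br : V -> V -> V) (e : V) : Prop := forall x, br e x = 0.

Definition riemannian (M : 'M[R]_n) : Prop :=
  forall x : V, x != 0 -> 0 < bform M x x.

(* Lorentzian: nondegenerate of index 1 (Sylvester diagonalisation with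
   exactly one negative diagonal entry) *)
Definition lorentzian (M : 'M[R]_n) : Prop :=
  exists (P : 'M[R]_n) (d : 'rV[R]_n),
    P \in unitmx /\ P *m M *m P^T = diag_mx d /\
    (forall i, d 0 i != 0) /\ #|[set i | d 0 i < 0]| = 1%N.
End Defs.

(* Main.v *)
Require Import Defs.
From HB Require Import structures.
From mathcomp Require Import all_boot all_order all_algebra.
Import Order.TTheory GRing.Theory Num.Theory.
Set Implicit Arguments. Unset Strict Implicit.
Local Open Scope ring_scope.

Section H.
Variables (R : rcfType) (n : nat).
Implicit Types (M : 'M[R]_n) (x y z : 'rV[R]_n).

Lemma bformDl M x y z : bform M (x + y) z = bform M x z + bform M y z.
Proof. by rewrite /bform !mulmxDl mxE. Qed.
Lemma bformZl M a x z : bform M (a *: x) z = a * bform M x z.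
Proof. by rewrite /bform -!scalemxAl mxE. Qed.
Lemma bformNl M x z : bform M (- x) z = - bform M x z.
Proof. by rewrite -scaleN1r bformZl mulN1r. Qed.
Lemma bformBl M x y z : bform M (x - y) z = bform M x z - bform M y z.
Proof. by rewrite bformDl bformNl. Qed.
Lemma bform0l M z : bform M 0 z = 0.
Proof. by rewrite /bform !mul0mx mxE. Qed.
Lemma bformDr M x y z : bform M z (x + y) = bform M z x + bform M z y.
Proof. by rewrite /bform linearD /= mulmxDr mxE. Qed.
Lemma bformZr M a x z : bform M z (a *: x) = a * bform M z x.
Proof. by rewrite /bform linearZ /= -scalemxAr mxE. Qed.
Lemma bformNr M x z : bform M z (- x) = - bform M z x.
Proof. by rewrite -scaleN1r bformZr mulN1r. Qed.
Lemma bformBr M x y z : bform M z (x - y) = bform M z x - bform M z y.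
Proof. by rewrite bformDr bformNr. Qed.
Lemma bform0r M z : bform M z 0 = 0.
Proof. by rewrite /bform trmx0 mulmx0 mxE. Qed.

Lemma bform_sym M x y : M^T = M -> bform M x y = bform M y x.
Proof.
move=> hM; rewrite /bform -[in LHS](trmxK (x *m M *m y^T)) mxE.
by rewrite !trmx_mul trmxK hM mulmxA.
Qed.

Lemma bform_nondeg M x : M \in unitmx -> (forall z, bform M x z = 0) -> x = 0.
Proof.
move=> hu h.
have h0 : x *m M = 0.
  apply/matrixP=> i j; rewrite (ord1 i) [RHS]mxE.
  have := h (delta_mx 0 j); rewrite /bform trmx_delta -colE mxE => ->.
  by [].
by rewrite -(mulmxK hu x) h0 mul0mx.
Qed.

Lemma bform_diag (d : 'rV[R]_n) x y :
  (x *m diag_mx d *m y^T) 0 0 = \sum_i x 0 i * d 0 i * y 0 i.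
Proof.
rewrite mul_mx_diag mxE; apply: eq_bigr => i _; by rewrite !mxE.
Qed.
Lemma lor_iso M P (d : 'rV[R]_n) i0 x : P \in unitmx -> P *m M *m P^T = diag_mx d ->
  (forall i, i != i0 -> 0 < d 0 i) -> (x *m invmx P) 0 i0 = 0 ->
  bform M x x = 0 -> x = 0.
Proof.
move=> hP hD hpos hx0 hxx.
set x' := x *m invmx P in hx0.
have hx : x = x' *m P by rewrite /x' mulmxKV.
clearbody x'.
have hs : \sum_i x' 0 i * d 0 i * x' 0 i = 0.
  rewrite -bform_diag -hD -hxx /bform.
  rewrite [in RHS]hx.
  by rewrite trmx_mul !mulmxA.
have hnn : forall i, true -> 0 <= x' 0 i * d 0 i * x' 0 i.
  move=> i _; case: (eqVneq i i0) => [->|hi]; first by rewrite hx0 !mul0r.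
  by rewrite mulrC mulrA -expr2 mulr_ge0 ?sqr_ge0 // ltW // hpos.
have h0 := psumr_eq0P hnn hs.
have hx'0 : x' = 0.
  apply/matrixP=> i j; rewrite (ord1 i) [RHS]mxE.
  case: (eqVneq j i0) => [->|hj]; first by [].
  have := h0 j isT; move/eqP; rewrite !mulf_eq0 (gt_eqF (hpos j hj)) /=.
  by rewrite orbF orbb => /eqP.
by rewrite hx hx'0 mul0mx.
Qed.

Lemma lorentz_dep M a b : lorentzian M -> bform M a a = 0 -> bform M b b = 0 ->
  bform M a b = 0 -> bform M b a = 0 -> a = 0 \/ exists c, b = c *: a.
Proof.
move=> [P [d [hP [hD [hnz hcard]]]]] haa hbb hab hba.
have /cards1P [i0 hS] : #|[set i | d 0 i < 0]| == 1%N by rewrite hcard.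
have hpos : forall i, i != i0 -> 0 < d 0 i.
  move=> i hi; have : (i \in [set i | d 0 i < 0]) = (i \in [set i0]) by rewrite hS.
   rewrite /= !inE (negbTE hi).
  move=> hlt; rewrite lt0r hnz /= leNgt hlt //.
set a0 := (a *m invmx P) 0 i0; set b0 := (b *m invmx P) 0 i0.
case: (eqVneq a0 0) => ha0.
  by left; apply: (lor_iso hP hD hpos ha0 haa).
right; exists (b0 / a0).
set w := b0 *: a - a0 *: b.
have hw0 : (w *m invmx P) 0 i0 = 0.
  rewrite /w mulmxBl -!scalemxAl /a0 /b0.
  set A := a *m invmx P; set B := b *m invmx P.
  by rewrite !mxE mulrC subrr.
have hww : bform M w w = 0.
  rewrite /w !(bformBl, bformBr, bformZl, bformZr) haa hbb hab hba.
  by rewrite !mulr0 !subrr !mulr0 subrr.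
have := lor_iso hP hD hpos hw0 hww; rewrite /w => /eqP; rewrite subr_eq0 => /eqP h.
by rewrite mulrC -scalerA h scalerA mulVf // scale1r.
Qed.
End H.
Theorem mainTheorem11 (R : rcfType) (n : nat)
  (br : 'rV[R]_n -> 'rV[R]_n -> 'rV[R]_n) (K U : 'M[R]_n)
  (p : 'rV[R]_n -> 'rV[R]_n -> 'rV[R]_n) :
  quadratic br K ->
  U \in unitmx -> k_symmetric K U ->
  levi_civita br (bform (U *m K)) p ->
  flat br p ->
  (forall e, central br e -> forall x, p e (p e x) = 0) /\
  (riemannian (U *m K) \/ lorentzian (U *m K) ->
     (forall e, central br e -> forall x, p e x = 0) /\
     (forall e, central br e -> central br (e *m U))).
Proof.
move=> [[hl1 [hl2 [hal hj]]] [hKT [hKu hinv]]] hU hks hL hF.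
have gK : forall a b, bform (U *m K) a b = bform K (a *m U) b.
  by move=> a b; rewrite /bform !mulmxA.
have hUK : U *m K \in unitmx by rewrite unitmx_mul hU hKu.
have gsym : forall a b, bform (U *m K) a b = bform (U *m K) b a.
  by move=> a b; rewrite !gK hks bform_sym.
have gnd := fun v => @bform_nondeg R n (U *m K) v hUK.
have two : (2:R) != 0 by rewrite pnatr_eq0.
have br0l : forall z, br 0 z = 0.
  by move=> z; have := hl1 (-1) z z z; rewrite !scaleN1r !addNr.
have br0r : forall z, br z 0 = 0.
  by move=> z; have := hl2 (-1) z z z; rewrite !scaleN1r !addNr.
have brD : forall x y z, br x (y + z) = br x y + br x z.
  by move=> x y z; have := hl2 1 x y z; rewrite !scale1r.
have brDl : forall x y z, br (y + z) x = br y x + br z x.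
  by move=> x y z; have := hl1 1 y z x; rewrite !scale1r.
have anti : forall x y, br y x = - br x y.
  move=> x y; apply/eqP; rewrite -addr_eq0; apply/eqP.
  have := hal (x + y); rewrite !brD !brDl !hal add0r addr0 => ->; by [].
have kos0 : forall x y, (forall z, bform (U *m K) (br x y) z
    - bform (U *m K) (br y z) x + bform (U *m K) (br z x) y = 0) -> p x y = 0.
  move=> x y H; apply: gnd => z; have := hL x y z; rewrite H => /eqP.
  by rewrite mulf_eq0 (negbTE two) => /eqP.
have p0l : forall y, p 0 y = 0.
  by move=> y; apply: kos0 => z; rewrite br0l br0r !(bform0l, bform0r) subrr addr0.
have p0r : forall y, p y 0 = 0.
  by move=> y; apply: kos0 => z; rewrite br0l br0r !(bform0l, bform0r) subrr addr0.
have part1 : forall e, central br e -> forall x, p e (p e x) = 0.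
  move=> e he.
  have hez : forall z, br z e = 0 by move=> z; rewrite anti he oppr0.
  have pee : p e e = 0.
    by apply: kos0 => z; rewrite !he !hez !(bform0l, bform0r) subrr addr0.
  have comm : forall z, p e z = p z e.
    move=> z; apply/eqP; rewrite -subr_eq0; apply/eqP; apply: gnd => w.
    apply: (mulfI two); rewrite mulr0 bformBl mulrBr !hL !he !hez (anti w z).
    by rewrite !(bform0l, bformNl) sub0r opprK addr0 subrr add0r subrr.
  move=> x; rewrite [p e x]comm; have := hF e x e.
  by rewrite pee !he p0l p0r !subr0.
split=> // hRL.
have part2 : forall e, central br e -> forall x, p e x = 0.
  move=> e he.
  have hez : forall z, br z e = 0 by move=> z; rewrite anti he oppr0.
  have skew : forall y z, bform (U *m K) (p e y) z = - bform (U *m K) y (p e z).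
    move=> y z; rewrite [bform _ y _]gsym.
    apply: (mulfI two); rewrite mulrN !hL !he !hez (anti y z).
    by rewrite !(bform0l, bformNl) !add0r !addr0 opprK.
  have iso : forall y z, bform (U *m K) (p e y) (p e z) = 0.
    by move=> y z; rewrite skew part1 // bform0r oppr0.
  have isoy : forall y, bform (U *m K) y (p e y) = 0.
    move=> y.
    have h : bform (U *m K) y (p e y) = - bform (U *m K) y (p e y).
      by rewrite -{1}gsym skew.
    have : bform (U *m K) y (p e y) *+ 2 == 0 by rewrite mulr2n {1}h addNr.
    by rewrite mulrn_eq0 /= => /eqP.
  case: hRL => [hr|hl] x.
    case: (eqVneq (p e x) 0) => // h; have := hr _ h.
    by rewrite iso ltxx.
  apply: gnd => w.
  have [h0|[c hc]] := lorentz_dep hl (iso x x) (iso w w) (iso x w) (iso w x).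
    by rewrite h0 bform0l.
  by rewrite skew hc bformZr isoy mulr0 oppr0.
split=> // e he y.
have Hg : forall y z, bform (U *m K) (br y z) e = 0.
  move=> y' z; have := hL e y' z; rewrite part2 // bform0l mulr0 he.
  rewrite (anti e z) he oppr0 !bform0l add0r addr0 => /eqP.
  by rewrite eq_sym oppr_eq0 => /eqP.
apply: (bform_nondeg hKu) => z.
by rewrite (anti y) bformNl bform_sym // -hinv -hks -gK Hg.
Qed.
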